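(* Let $\lambda=(\lambda^n_{s,h})_{n\in N,\,s\in S,\,h\in H}\in\mathbb{R}^{|S|\times|H|\times|N|}$ be any deterministic price decomposition process, and suppose the weekly uncertainties $(W_{s})_{s\in S}$ are weekly independent (the joint law of $(W_{s_0},\dots,W_{\bar s})$, together with any initial noise, is the product of the marginal laws). Then, for every initial state $x_0=(x_0^n)_{n\in N}\in\prod_{n\in N}X^n_{s_0}$, $$\sum_{n\in N} V^n_{s_0}[\lambda^n](x_0^n)+V^{A}[\lambda]\;\le\; V_{s_0}(x_0),$$ where $V_{s_0}(x_0)$ is the initial global cost-to-go (which, under weekly independence, equals the optimal value of the global multistage problem started at $x_0$).
   Context: Setting. Weeks form a finite totally ordered set $S=\{s_0\prec\dots\prec\bar s\}$, with successor $s^+$ and an extra terminal week $s_{\mathrm{last}}=\bar s^+$; hours form a finite ordered set $H$. The system is a directed graph $(N,A)$ with node–arc incidence matrix $B\in\{-1,0,1\}^{N\times A}$ ($B_{n,a}=1$ if arc $a$ leaves $n$, $-1$ if it enters $n$, $0$ otherwise). For node $n$ and week $s$: the state $x^n_s\in X^n_s$ is the storage level at the first hour of week $s$; $W^n_s$ is the (random) vector of hourly uncertainties of week $s$ at node $n$ with values in a measurable space; $u^n_s$ is the vector of hourly recourse controls of week $s$; $f^n_s\in\mathbb{R}^{|H|}$ is the vector of hourly nodal import/export flows; for arc $a$, $q^a_s\in\mathbb{R}^{|H|}$ is the vector of hourly arc flows. Write $W_s=(W^n_s)_{n\in N}$, $f_s=(f^n_s)_n$, $q_s=(q^a_s)_a$.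 Given are measurable weekly dynamics $x^n_{s^+}=g^n_s(x^n_s,w^n_s,u^n_s)$, weekly nodal balance functions with constraint $b^n_s(w^n_s,u^n_s)=f^n_s$, box constraints on the hourly storage levels within the week (obtained by composing hourly dynamics) and on the hourly controls, weekly nodal costs $L^n_s(x^n_s,w^n_s,u^n_s)\in\mathbb{R}\cup\{+\infty\}$, weekly arc costs $L^a_s(q^a_s)\in\mathbb{R}\cup\{+\infty\}$, and final costs $K^n$. Decisions of week $s'$ taken from week $s$ onwards must be measurable with respect to $\sigma(W_s,\dots,W_{s'})$ (weekly hazard–decision information). For the price, $\langle\lambda_s,f_s-Bq_s\rangle=\sum_{h\in H}\lambda_{s,h}^{\top}(f_{s,h}-Bq_{s,h})$ and $\langle\lambda^n_s,f^n_s\rangle=\sum_{h}\lambda^n_{s,h}f^n_{s,h}$. Global cost-to-go: $V_s(x)=\min\mathbb{E}\big[\sum_{s'=s}^{\bar s}\big(\sum_{n}L^n_{s'}(X^n_{s'},W^n_{s'},U^n_{s'})+\sum_a L^a_{s'}(Q^a_{s'})\big)+\sum_n K^n(X^n_{s_{\mathrm{last}}})\big]$ over processes $(U,F,Q)$ subject to $X_s=x$, the dynamics, balance, box constraints at each node, the information constraints, and the coupling $F_{s'}-BQ_{s'}=0$ for all $s'\in[s,\bar s]$. Nodal price cost-to-go: $V^n_s[\lambda^n](x^n)=\min\mathbb{E}\big[\sum_{s'=s}^{\bar s}\big(L^n_{s'}(X^n_{s'},W^n_{s'},U^n_{s'})+\langle\lambda^n_{s'},F^n_{s'}\rangle\big)+K^n(X^n_{s_{\mathrm{last}}})\big]$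 over $(U^n,F^n)$ subject to $X^n_s=x^n$, the nodal dynamics, balance, box constraints and information constraints. Arc price value function: $V^A[\lambda]=\min_{q}\big[\sum_{a\in A}\sum_{s\in S}L^a_s(q^a_s)-\langle B^\top\lambda,q\rangle\big]$ over deterministic arc flows $q$ (equivalently over adapted random arc flows in expectation). *)

(* Defs.v *)
From HB Require Import structures.
From mathcomp Require Import all_boot all_order all_algebra.
From mathcomp Require Import all_classical all_reals all_analysis.
From mathcomp Require Import measurable_realfun.
Set Implicit Arguments. Unset Strict Implicit. Unset Printing Implicit Defensive.
Import Order.TTheory GRing.Theory Num.Theory.
Import numFieldNormedType.Exports.
Local Open Scope classical_set_scope.
Local Open Scope ring_scope.

(* Conventions.
   - Weeks S = {s_0 < ... < \bar s} are 'I_T (s_0 = ord0); the terminal week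
     s_last = \bar s^+ is the index T.  States are indexed by 'I_T.+1
     (index k = storage level at the first hour of week k, k = T is s_last).
   - Hours H are 'I_nH; an hourly vector is a function 'I_nH -> R.
   - Nodes N and arcs A are finite types; the graph is given by the source and
     target of each arc; B is its node-arc incidence matrix. *)

Record system (R : realType) (T nH : nat) (N A : finType)
    (dX dW dU : measure_display) := System {
  src : A -> N;
  tgt : A -> N;
  Xt : N -> measurableType dX;
  Wt : N -> 'I_T -> measurableType dW;
  Ut : N -> 'I_T -> measurableType dU;
  Xset : forall n, 'I_T.+1 -> set (Xt n);
  dyn : forall n (s : 'I_T), Xt n -> Wt n s -> Ut n s -> Xt n;
  bal : forall n (s : 'I_T), Wt n s -> Ut n s -> 'I_nH -> R;
  (* box constraints of week s (hourly storage levels obtained by composing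
     hourly dynamics, and hourly controls) *)
  box : forall n (s : 'I_T), Xt n -> Wt n s -> Ut n s -> Prop;
  Lnode : forall n (s : 'I_T), Xt n -> Wt n s -> Ut n s -> \bar R;
  Larc : A -> 'I_T -> ('I_nH -> R) -> \bar R;
  Kfin : forall n, Xt n -> \bar R
}.

Arguments src {R T nH N A dX dW dU} _.
Arguments tgt {R T nH N A dX dW dU} _.
Arguments Xt {R T nH N A dX dW dU} _.
Arguments Wt {R T nH N A dX dW dU} _.
Arguments Ut {R T nH N A dX dW dU} _.
Arguments Xset {R T nH N A dX dW dU} _.
Arguments dyn {R T nH N A dX dW dU} _ {_ _}.
Arguments bal {R T nH N A dX dW dU} _ {_ _}.
Arguments box {R T nH N A dX dW dU} _ {_ _}.
Arguments Lnode {R T nH N A dX dW dU} _ {_ _}.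
Arguments Larc {R T nH N A dX dW dU} _.
Arguments Kfin {R T nH N A dX dW dU} _ {_}.

Section Model.
Variables (R : realType) (T nH : nat) (N A : finType)
  (dX dW dU : measure_display) (sys : system R T nH N A dX dW dU).

Definition incidence (n : N) (a : A) : R :=
  (src sys a == n)%:R - (tgt sys a == n)%:R.

Definition well_posed : Prop :=
  [/\ forall n (s : 'I_T), measurable_fun setT
        (fun p : Xt sys n * Wt sys n s * Ut sys n s => dyn sys p.1.1 p.1.2 p.2),
      forall n (s : 'I_T) (h : 'I_nH), measurable_fun setT
        (fun p : Wt sys n s * Ut sys n s => bal sys p.1 p.2 h),
      forall n (s : 'I_T), measurable
        [set p : Xt sys n * Wt sys n s * Ut sys n s | box sys p.1.1 p.1.2 p.2],
      forall n (k : 'I_T.+1), measurable (Xset sys n k) &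
    [/\ forall n (s : 'I_T), measurable_fun setT
        (fun p : Xt sys n * Wt sys n s * Ut sys n s => Lnode sys p.1.1 p.1.2 p.2 : \bar R),
      forall a (s : 'I_T), measurable_fun setT
        (fun t : nH.-tuple R => Larc sys a s (fun h => tnth t h)),
      forall n, measurable_fun setT (@Kfin _ _ _ _ _ _ _ _ sys n) &
      [/\ forall n s x w u, Lnode sys (n := n) (s := s) x w u != -oo%E,
          forall a s q, Larc sys a s q != -oo%E &
          forall n x, Kfin sys (n := n) x != -oo%E]]].

Variables (dO : measure_display) (Omega : measurableType dO)
  (P : probability Omega R).

Variable W : forall n (s : 'I_T), Omega -> Wt sys n s.

Definition sigmaW (s : 'I_T) : set (set Omega) :=
  <<s [set E | exists n (B : set (Wt sys n s)), measurable B /\ E = W n s @^-1` B] >>.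

Definition weekly_independent : Prop :=
  forall E : 'I_T -> set Omega, (forall s, sigmaW s (E s)) ->
    P (\bigcap_(s in [set: 'I_T]) E s) = (\prod_(s < T) P (E s))%E.

Definition info (s' : 'I_T) : set (set Omega) :=
  <<s [set E | exists n (r : 'I_T) (B : set (Wt sys n r)),
        (r <= s')%N /\ measurable B /\ E = W n r @^-1` B] >>.

Definition measurable_wrt {dY : measure_display} {Ym : measurableType dY}
    (F : set (set Omega)) (f : Omega -> Ym) : Prop :=
  forall B : set Ym, measurable B -> F (f @^-1` B).

Fixpoint traj (n : N) (x0 : Xt sys n) (U : forall s : 'I_T, Omega -> Ut sys n s)
    (k : nat) (w : Omega) : Xt sys n :=
  match k with
  | 0 => x0
  | k'.+1 =>
    match insub k' with
    | Some s => dyn sys (traj x0 U k' w) (W n s w) (U s w)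
    | None => traj x0 U k' w
    end
  end.

(* nodal admissibility: information constraints, a.s. balance, box and state
   constraints, and integrability (so that the expectations make sense) *)
Definition node_admissible (n : N) (x0 : Xt sys n)
    (U : forall s : 'I_T, Omega -> Ut sys n s) (F : 'I_T -> Omega -> 'I_nH -> R)
    : Prop :=
  [/\ forall s, measurable_wrt (info s) (U s),
      forall (s : 'I_T) (h : 'I_nH), measurable_wrt (info s) (fun w => F s w h),
      {ae P, forall w, (forall s : 'I_T,
          bal sys (W n s w) (U s w) = F s w
          /\ box sys (traj x0 U s w) (W n s w) (U s w))},
      {ae P, forall w, (forall k : 'I_T.+1, Xset sys n k (traj x0 U k w))} &
      [/\ forall s : 'I_T, P.-integrable setT
            (fun w => Lnode sys (traj x0 U s w) (W n s w) (U s w)),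
          P.-integrable setT (fun w => Kfin sys (traj x0 U T w)) &
          forall (s : 'I_T) (h : 'I_nH), P.-integrable setT (fun w => (F s w h)%:E)]].

Definition pairing (l f : 'I_nH -> R) : R := \sum_(h < nH) l h * f h.

Definition V_node (n : N) (lamn : 'I_T -> 'I_nH -> R) (x0 : Xt sys n) : \bar R :=
  ereal_inf [set c | exists U F, node_admissible x0 U F /\
    c = (\int[P]_w (\sum_(s < T) (Lnode sys (traj x0 U s w) (W n s w) (U s w)
                                  + (pairing (lamn s) (F s w))%:E)
                    + Kfin sys (traj x0 U T w)))%E].

Definition V_arc (lam : N -> 'I_T -> 'I_nH -> R) : \bar R :=
  ereal_inf [set c | exists q : A -> 'I_T -> 'I_nH -> R,
    c = (\sum_(a : A) \sum_(s < T) Larc sys a s (q a s)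
         - (\sum_(a : A) \sum_(s < T) \sum_(h < nH)
              (\sum_(n : N) incidence n a * lam n s h) * q a s h)%:E)%E].

Definition global_admissible (x0 : forall n, Xt sys n)
    (U : forall n (s : 'I_T), Omega -> Ut sys n s)
    (F : N -> 'I_T -> Omega -> 'I_nH -> R)
    (Q : A -> 'I_T -> Omega -> 'I_nH -> R) : Prop :=
  [/\ forall n, node_admissible (x0 n) (U n) (F n),
      forall a (s : 'I_T) (h : 'I_nH), measurable_wrt (info s) (fun w => Q a s w h),
      forall a (s : 'I_T) (h : 'I_nH), P.-integrable setT (fun w => (Q a s w h)%:E),
      forall a (s : 'I_T), P.-integrable setT (fun w => Larc sys a s (Q a s w)) &
      {ae P, forall w, (forall n (s : 'I_T) (h : 'I_nH),
          F n s w h - \sum_(a : A) incidence n a * Q a s w h = 0)}].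

Definition V_glob (x0 : forall n, Xt sys n) : \bar R :=
  ereal_inf [set c | exists U F Q, global_admissible x0 U F Q /\
    c = (\int[P]_w (\sum_(s < T)
            (\sum_(n : N) Lnode sys (traj (x0 n) (U n) s w) (W n s w) (U n s w)
             + \sum_(a : A) Larc sys a s (Q a s w))
          + \sum_(n : N) Kfin sys (traj (x0 n) (U n) T w)))%E].

End Model.
Arguments V_node {R T nH N A dX dW dU sys dO Omega} P W n lamn x0.

(* Main.v *)
Require Import Defs.
From HB Require Import structures.
From mathcomp Require Import all_boot all_order all_algebra.
From mathcomp Require Import all_classical all_reals all_analysis.
From mathcomp Require Import measurable_realfun.
Import Order.TTheory GRing.Theory Num.Theory.
Local Open Scope classical_set_scope.
Local Open Scope ring_scope.

Section Helpers.
Context (R : realType) (dO : measure_display) (Omega : measurableType dO)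
  (P : probability Omega R).
Local Open Scope ereal_scope.

Lemma intEFin_sum (I : Type) (s : seq I) (f : I -> Omega -> R) :
  (forall i, P.-integrable setT (fun w => (f i w)%:E)) ->
  P.-integrable setT (fun w => (\sum_(i <- s) f i w)%R%:E).
Proof.
move=> hf.
have -> : (fun w => (\sum_(i <- s) f i w)%R%:E) = (fun w => \sum_(i <- s) (f i w)%:E).
  by apply/funext => w; rewrite sumEFin.
by apply: integrable_sum => // i _; exact: hf.
Qed.

Lemma intEFin_scale (k : R) (f : Omega -> R) :
  P.-integrable setT (fun w => (f w)%:E) ->
  P.-integrable setT (fun w => (k * f w)%R%:E).
Proof.
move=> hf.
have -> : (fun w => (k * f w)%R%:E) = (fun w => k%:E * (f w)%:E).
  by apply/funext => w; rewrite EFinM.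
exact: integrableZl.
Qed.

Lemma le_int_lb (x : \bar R) (g : Omega -> \bar R) :
  P.-integrable setT g -> (forall w, x <= g w) -> x <= \int[P]_w g w.
Proof.
case: x => [r| |] ig hg; last exact: leNye.
- have H := le_integral measurableT (finite_measure_integrable_cst P r measurableT) ig.
  have H1 : \int[P]_(w in setT) (cst r%:E) w = r%:E.
    by rewrite integral_cst//= probability_setT mule1.
  rewrite -H1; apply: H => w _; exact: hg.
- exfalso; move: ig => /integrableP[_].
  have -> : (fun w => `|g w|) = cst +oo.
    by apply/funext => w; have := hg w; rewrite leye_eq => /eqP ->.
  by rewrite integral_cst//= probability_setT mule1 ltxx.
Qed.
Lemma ac4 (a q k l x : \bar R) : a + q + k + (l + x) = a + l + k + (q + x).
Proof.
rewrite -!addeA; congr (_ + _).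
rewrite addeCA (addeCA q); exact: addeCA.
Qed.
End Helpers.
Theorem proposition1 (R : realType) (T nH : nat) (N A : finType)
  (dX dW dU : measure_display) (sys : system R T nH N A dX dW dU)
  (dO : measure_display) (Omega : measurableType dO) (P : probability Omega R)
  (W : forall n (s : 'I_T), Omega -> Wt sys n s)
  (hT : (0 < T)%N)
  (hsys : well_posed sys)
  (hW : forall n s, measurable_fun setT (W n s))
  (hind : weekly_independent P W)
  (lam : N -> 'I_T -> 'I_nH -> R)
  (x0 : forall n, Xt sys n)
  (hx0 : forall n, Xset sys n ord0 (x0 n)) :
  (\sum_(n : N) V_node P W n (lam n) (x0 n) + V_arc sys lam
     <= V_glob P W x0)%E.
Proof.
rewrite /V_glob; apply: le_ereal_inf_tmp => c [U [F [Q [[hN hQm hQi hLa hcpl] ->]]]].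
pose L (n : N) (s : 'I_T) (w : Omega) := Lnode sys (traj W (x0 n) (U n) s w) (W n s w) (U n s w).
pose K (n : N) (w : Omega) := Kfin sys (traj W (x0 n) (U n) T w).
pose La a s w := Larc sys a s (Q a s w).
pose p n s w := pairing (lam n s) (F n s w).
pose X w := (\sum_a \sum_(s < T) \sum_(h < nH)
   (\sum_n incidence sys n a * lam n s h) * Q a s w h)%R.
pose Node n w := (\sum_(s < T) (L n s w + (p n s w)%:E) + K n w)%E.
pose b w := (\sum_a \sum_(s < T) La a s w - (X w)%:E)%E.
pose Y w := (\sum_n \sum_(s < T) p n s w - X w)%R.
have iL : forall n s, P.-integrable setT (L n s).
  by move=> n s; case: (hN n) => _ _ _ _ [+ _ _]; apply.
have iK : forall n, P.-integrable setT (K n).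
  by move=> n; case: (hN n) => _ _ _ _ [].
have iF : forall n s h, P.-integrable setT (fun w => (F n s w h)%:E).
  by move=> n s h; case: (hN n) => _ _ _ _ [_ _]; apply.
have ip : forall n s, P.-integrable setT (fun w => (p n s w)%:E).
  move=> n s; rewrite /p /pairing; apply: intEFin_sum => h.
  exact: intEFin_scale.
have iX : P.-integrable setT (fun w => (X w)%:E).
  rewrite /X; apply: intEFin_sum => a; apply: intEFin_sum => s.
  apply: intEFin_sum => h; exact: intEFin_scale.
have iNode : forall n, P.-integrable setT (Node n).
  move=> n; apply: (integrableD measurableT) => //.
  apply: integrable_sum => // s _; apply: (integrableD measurableT) => //.
have ib : P.-integrable setT b.
  apply: (integrableB measurableT) => //.
  apply: integrable_sum => // a _; apply: integrable_sum => // s _.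
  exact: hLa.
have iY : P.-integrable setT (fun w => (Y w)%:E).
  have iP : P.-integrable setT (fun w => (\sum_n \sum_(s < T) p n s w)%R%:E).
    have -> : (fun w => (\sum_n \sum_(s < T) p n s w)%R%:E) =
       (fun w => \sum_n \sum_(s < T) (p n s w)%:E).
      by apply/funext => w; rewrite -sumEFin; apply: eq_bigr => n _; rewrite sumEFin.
    by apply: integrable_sum => // n _; apply: integrable_sum => // s _.
  exact: (integrableB measurableT iP iX).
have S1 : (\sum_n V_node P W n (lam n) (x0 n) <= \sum_n \int[P]_w Node n w)%E.
  apply: lee_sum => n _; apply: ereal_inf_lbound.
  by exists (U n), (F n); split.
have S2 : (V_arc sys lam <= \int[P]_w b w)%E.
  apply: le_int_lb => // w; apply: ereal_inf_lbound.
  by exists (fun a s => Q a s w).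
apply: le_trans (leeD S1 S2) _.
rewrite -integral_sum // -integralD //; last exact: integrable_sum.
pose G w := (\sum_(s < T) (\sum_n L n s w + \sum_a La a s w) + \sum_n K n w)%E.
have iG : P.-integrable setT G.
  apply: (integrableD measurableT).
    apply: integrable_sum => // s _; apply: (integrableD measurableT).
      by apply: integrable_sum => // n _; exact: iL.
    by apply: integrable_sum => // a _; exact: hLa.
  by apply: integrable_sum => // n _; exact: iK.
have E : forall w, (\sum_k Node k w + b w = G w + (Y w)%:E)%E.
  move=> w; rewrite /Node /b /G /Y.
  rewrite big_split /=.
  under eq_bigr do rewrite big_split /=.
  rewrite big_split /= [in RHS]big_split /=.
  rewrite [\sum_(s < T) \sum_n L n s w]exchange_big /=.
  rewrite [\sum_(s < T) \sum_a La a s w]exchange_big /=.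
  rewrite EFinB -sumEFin.
  rewrite ac4; congr (_ + (_ + _)).
  by apply: eq_bigr => i _; rewrite sumEFin.
rewrite (eq_integral (fun w => G w + (Y w)%:E)%E); last by move=> w _; exact: E.
have mY : measurable_fun setT (fun w => (Y w)%:E) by exact: measurable_int iY.
rewrite integralD //.
rewrite (@ae_eq_integral _ _ _ P setT (cst 0) (fun w => (Y w)%:E) measurableT mY
   (measurable_cst _)); last first.
  apply: filterS hcpl => w hw _ /=; congr EFin.
  have hF : forall n s h, F n s w h = (\sum_a incidence sys n a * Q a s w h)%R.
    by move=> n s h; apply/eqP; rewrite -subr_eq0 hw.
  rewrite /Y /X /p /pairing; apply/eqP; rewrite subr_eq0; apply/eqP.
  under eq_bigr => n _ do under eq_bigr => s _ do under eq_bigr => h _ do rewrite hF mulr_sumr.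
  under [in RHS]eq_bigr => a _ do under eq_bigr => s _ do under eq_bigr => h _ do rewrite mulr_suml.
  rewrite exchange_big /= [in RHS]exchange_big /=.
  apply: eq_bigr => s _.
  rewrite exchange_big /=.
  under [in RHS]eq_bigr => a _ do idtac.
  rewrite [in RHS]exchange_big /=.
  apply: eq_bigr => h _.
  rewrite [in RHS]exchange_big /=.
  apply: eq_bigr => n _; apply: eq_bigr => a _.
  by rewrite mulrCA mulrA.
by rewrite integral0 adde0.
Qed.
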